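(* Let $\rho_0,\rho$ be Lévy measures on $(0,+\infty)$, $P_0$ an atomless probability on $\mathbb X$, and $\tilde{\boldsymbol\mu}\sim\mathrm{hCRV}(\rho,\rho_0,P_0)$. Then each marginal $\tilde\mu_i$ is infinitely active (i.e. the marginal Lévy measure $\rho_1(\cdot)=\int_0^{+\infty}P_{\mathrm{ID}(t\rho)}(\cdot)\,\mathrm d\rho_0(t)$ of $\tilde\mu_i$, restricted to $(0,+\infty)$, has infinite total mass) if and only if $$\int_0^{+\infty}\mathrm d\rho_0(t)=\int_0^{+\infty}\mathrm d\rho(t)=+\infty.$$
   Context: Let $\mathbb X$ be a Polish space. A Lévy measure on $(0,+\infty)$ is a σ-finite measure $\rho$ with $\rho((\epsilon,+\infty))<\infty$ and $\int_{(0,\epsilon)}s\,\mathrm d\rho(s)<\infty$ for all $\epsilon>0$; its Laplace exponent is $\psi(\lambda)=\int_0^{+\infty}(1-e^{-\lambda s})\,\mathrm d\rho(s)$. $\mathrm{ID}(\rho)$ is the infinitely divisible distribution on $[0,+\infty)$ with Laplace transform $e^{-\psi(\lambda)}$, with law $P_{\mathrm{ID}(\rho)}$. For a finite (possibly random) measure $m$ on $\mathbb X$, $\tilde\mu\sim\mathrm{CRM}(\rho\otimes m)$ means that (conditionally on $m$) evaluations on pairwise disjoint Borel sets are independent and $E[e^{-\lambda\tilde\mu(A)}]=e^{-m(A)\psi(\lambda)}$. $\tilde{\boldsymbol\mu}=(\tilde\mu_1,\dots,\tilde\mu_d)\sim\mathrm{hCRV}(\rho,\rho_0,P_0)$ means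 $\tilde\mu_0\sim\mathrm{CRM}(\rho_0\otimes P_0)$ and, conditionally on $\tilde\mu_0$, the $\tilde\mu_i$ are independent with $\tilde\mu_i\sim\mathrm{CRM}(\rho\otimes\tilde\mu_0)$. Each $\tilde\mu_i$ is then a completely random measure with Lévy intensity $\rho_1\otimes P_0$, $\rho_1$ as in the claim. A CRM is infinitely active if its Lévy measure on $(0,\infty)$ has infinite mass. *)

(* Defs.v *)
From HB Require Import structures.
From mathcomp Require Import all_boot all_order all_algebra.
From mathcomp Require Import all_classical all_reals all_analysis.
Set Implicit Arguments. Unset Strict Implicit. Unset Printing Implicit Defensive.
Import Order.TTheory GRing.Theory Num.Theory.
Local Open Scope classical_set_scope.
Local Open Scope ring_scope.

(* Measures on (0,+oo) are represented as measures on the Borel sets of R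
   giving no mass to ]-oo,0]. *)

Definition levy_measure (R : realType) (rho : {measure set R -> \bar R}) : Prop :=
  [/\ rho [set` (`]-oo, 0])%R] = 0%E,
      sigma_finite setT rho &
      forall eps : R, 0 < eps ->
        (rho [set` (`]eps, +oo[)%R] < +oo)%E /\
        (\int[rho]_(s in [set` (`]0, eps[)%R]) s%:E < +oo)%E ].

Definition laplace_exponent (R : realType) (rho : {measure set R -> \bar R})
    (l : R) : \bar R :=
  (\int[rho]_(s in [set` (`]0, +oo[)%R]) (1 - expR (- (l * s)))%:E)%E.

Definition is_ID (R : realType) (rho : {measure set R -> \bar R})
    (Q : probability R R) : Prop :=
  Q [set` (`]-oo, 0[)%R] = 0%E /\
  forall l : R, 0 <= l ->
    (\int[Q]_x (expR (- (l * x)))%:E = expeR (- laplace_exponent rho l))%E.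

Definition scaled_measure (R : realType) (t : R) (ht : 0 < t)
    (rho : {measure set R -> \bar R}) : {measure set R -> \bar R} :=
  mscale (NngNum (ltW ht)) rho.

(* Main.v *)
Require Import Defs.
From HB Require Import structures.
From mathcomp Require Import all_boot all_order all_algebra.
From mathcomp Require Import all_classical all_reals all_analysis.
From mathcomp Require Import measurable_realfun.
From mathcomp Require Import lra.
Import Order.TTheory GRing.Theory Num.Theory.
Local Open Scope classical_set_scope.
Local Open Scope ring_scope.

Local Close Scope ereal_scope.

Local Open Scope ereal_scope.
Lemma my_le_integral (R : realType) (mu : {measure set R -> \bar R}) (D : set R)
  (f1 f2 : R -> \bar R) : (forall x, D x -> 0 <= f1 x) ->
  (forall x, D x -> f1 x <= f2 x) ->
  \int[mu]_(x in D) f1 x <= \int[mu]_(x in D) f2 x.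
Proof.
move=> f10 f12.
have f20 : forall x, D x -> 0 <= f2 x by move=> x Dx; exact: le_trans (f10 _ Dx) (f12 _ Dx).
rewrite (ge0_integralE _ f10) (ge0_integralE _ f20) /=.
apply: le_ereal_sup => _ [h /= hf <-]; exists h => //= x.
apply: le_trans (hf x) _; rewrite /patch; case: ifP => // /[!inE] Dx; exact: f12.
Qed.

Local Close Scope ereal_scope.

Local Open Scope ereal_scope.

Lemma bigcup_pos (R : realType) :
  \bigcup_n [set` (`]n.+1%:R^-1, +oo[)%R] = [set` (`]0, +oo[)%R] :> set R.
Proof.
apply/seteqP; split => x /=.
  case=> n _ /=; rewrite !in_itv /= !andbT => /(lt_trans _); apply.
  by rewrite invr_gt0.
rewrite in_itv /= andbT => x0.
have [n] := ltr_add_invr x0; rewrite add0r => hn.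
by exists n => //=; rewrite in_itv /= andbT.
Qed.

Definition Fs (R : realType) (n : nat) : set R := [set` (`]n.+1%:R^-1, +oo[)%R].

Lemma mu_pos_approx (R : realType) (mu : {measure set R -> \bar R}) (K : \bar R) :
  K < mu [set` (`]0, +oo[)%R] ->
  exists n : nat, K < mu (Fs R n).
Proof.
move=> HK; apply: contrapT => /forallNP H.
have mF : forall n : nat, measurable (Fs R n) by move=> n; exact: measurable_itv.
have ndF : nondecreasing_seq (Fs R).
  move=> m n mn; apply/subsetPset => x; rewrite /Fs /= !in_itv /= !andbT.
  apply: le_lt_trans; rewrite lef_pV2 ?posrE ?ltr0n // ler_nat ltnS //.
have := @nondecreasing_cvg_mu _ _ _ mu _ mF _ ndF.
rewrite /Fs bigcup_pos => /(_ (measurable_itv _)) hc.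
have le : \forall n \near \oo, (mu \o Fs R) n <= K.
  by apply: nearW => n /=; rewrite leNgt; apply/negP; exact: H.
have := lime_le (cvgP _ hc) le.
rewrite (cvg_lim _ hc) // => h.
by move: (h eventually_filter); rewrite leNgt HK.
Qed.

Local Close Scope ereal_scope.


Lemma expRN_le_inv (R : realType) (y : R) : 0 < y -> expR (- y) <= y^-1.
Proof.
move=> y0; rewrite expRN lef_pV2 ?posrE ?expR_gt0 //.
by apply: le_trans (expR_ge1Dx y); rewrite lerDr.
Qed.

Lemma mlin (R : realType) (l : R) (D : set R) :
  measurable_fun D (fun x : R => (- (l * x))%R).
Proof.
have -> : (fun x : R => (- (l * x))%R) = (cst (- l)%R) \* id.
  by apply/funext => x /=; rewrite mulNr.
exact: measurable_funM.
Qed.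

Lemma mexp (R : realType) (l : R) (D : set R) :
  measurable_fun D (fun x : R => (expR (- (l * x))%R)%:E).
Proof.
apply/measurable_EFinP.
apply: measurableT_comp; [exact: measurable_expR | exact: mlin].
Qed.

Lemma m1exp (R : realType) (l : R) (D : set R) :
  measurable_fun D (fun x : R => (1 - expR (- (l * x)))%R%:E).
Proof.
apply/measurable_EFinP.
apply: measurable_funB => //; apply: measurableT_comp; [exact: measurable_expR | exact: mlin].
Qed.

Local Open Scope ereal_scope.

Lemma Q0_le (R : realType) (rho : {measure set R -> \bar R}) (t : R) (ht : (0 < t)%R)
  (Q : probability R R) : is_ID (scaled_measure ht rho) Q ->
  forall l : R, (0 <= l)%R ->
  Q [set 0%R] <= expeR (- laplace_exponent (scaled_measure ht rho) l).
Proof.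
move=> [_ HQ] l l0; rewrite -HQ //.
have -> : Q [set 0%R] = \int[Q]_(x in [set 0%R]) (expR (- (l * x)))%:E.
  rewrite (eq_integral (cst 1)) ?integral_cst ?mul1e //.
  by move=> x /[!inE] ->; rewrite mulr0 oppr0 expR0.
apply: ge0_subset_integral => //; first exact: mexp.
Qed.

Lemma psi_ge (R : realType) (rho : {measure set R -> \bar R}) (t : R) (ht : (0 < t)%R)
  (n : nat) :
  (t * (1 - expR (-1)))%:E * rho (Fs R n) <=
  laplace_exponent (scaled_measure ht rho) n.+1%:R.
Proof.
have c0 : (0 <= 1 - expR (-1) :> R)%R.
  by rewrite subr_ge0 -expR0 ler_expR oppr_le0.
rewrite /laplace_exponent /scaled_measure ge0_integral_mscale //=; last 2 first.
- exact: m1exp.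
- move=> x; rewrite /= in_itv /= andbT => x0.
  rewrite lee_fin subr_ge0 -expR0 ler_expR oppr_le0; apply: mulr_ge0 => //; exact: ltW.
rewrite EFinM -muleA; apply: lee_wpmul2l; first by rewrite lee_fin ltW.
rewrite -integral_cst; last exact: measurable_itv.
have H1 : \int[rho]_(x in Fs R n) (cst (1 - expR (-1))%:E) x <=
    \int[rho]_(x in Fs R n) (1 - expR (- (n.+1%:R * x)))%:E.
  apply: ge0_le_integral => //; first exact: measurable_itv.
  - exact: m1exp.
  - move=> x; rewrite /Fs /= in_itv /= andbT => x0.
    rewrite lee_fin lerB // ler_expR lerN2.
    by apply: ltW; rewrite -ltr_pdivrMl ?ltr0n // mulr1.
apply: le_trans H1 _.
apply: ge0_subset_integral => //; first exact: measurable_itv.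
- exact: m1exp.
- move=> x; rewrite /= in_itv /= andbT => x0.
  rewrite lee_fin subr_ge0 -expR0 ler_expR oppr_le0; apply: mulr_ge0 => //; exact: ltW.
- move=> x; rewrite /Fs /= !in_itv /= !andbT; apply: lt_trans.
  by rewrite invr_gt0.
Qed.

Lemma setT_split0 (R : realType) :
  [set: R] = [set` (`]-oo, 0[)%R] `|` ([set 0%R] `|` [set` (`]0, +oo[)%R]).
Proof.
apply/seteqP; split => x // _ /=; rewrite !in_itv /= andbT.
by case: (ltgtP x 0%R) => hx; [left|right;right|right;left].
Qed.

Lemma F1 (R : realType) (rho : {measure set R -> \bar R}) (t : R) (ht : (0 < t)%R)
  (Q : probability R R) : is_ID (scaled_measure ht rho) Q ->
  rho [set` (`]0, +oo[)%R] = +oo -> Q [set` (`]0, +oo[)%R] = 1.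
Proof.
move=> HID Hrho.
have c0 : (0 < 1 - expR (-1) :> R)%R.
  by rewrite subr_gt0 -expR0 ltr_expR oppr_lt0.
have Q00 : Q [set 0%R] = 0.
  apply/eqP; rewrite eq_le measure_ge0 andbT.
  apply/lee_addgt0Pr => e e0; rewrite add0e.
  pose K := ((t * (1 - expR (-1))) * e)^-1%R.
  have hK : K%:E < rho [set` (`]0, +oo[)%R] by rewrite Hrho ltry.
  have [n Hn] := mu_pos_approx _ _ _ hK.
  apply: le_trans (Q0_le _ _ _ _ _ HID _ (ler0n _ n.+1)) _.
  have H2 : (t * (1 - expR (-1)) * K)%:E <= laplace_exponent (scaled_measure ht rho) n.+1%:R.
    apply: le_trans (psi_ge _ _ _ ht n); rewrite EFinM; apply: lee_wpmul2l.
      by rewrite lee_fin mulr_ge0 // ltW.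
    exact: ltW.
  apply: le_trans (_ : expeR (- (t * (1 - expR (-1)) * K)%:E) <= _).
    by rewrite lee_expeR leeN2.
  rewrite /= lee_fin.
  have -> : (t * (1 - expR (-1)) * K = e^-1)%R.
    by rewrite /K invfM mulrA mulfV ?mul1r // gt_eqF // mulr_gt0.
  by rewrite -[X in (_ <= X)%R](invrK e); apply: expRN_le_inv; rewrite invr_gt0.
have := probability_setT Q.
rewrite setT_split0 measureU //=; first last.
- apply/seteqP; split => x // -[] /=; rewrite in_itv /= => hx [hx0|].
    by rewrite hx0 ltxx in hx.
  by rewrite in_itv /= andbT => /(lt_trans hx); rewrite ltxx.
- apply: measurableU => //; exact: measurable_itv.
rewrite measureU //=; first last.
- apply/seteqP; split => x // -[] /= hx0; rewrite hx0 in_itv /= ltxx //.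
by case: HID => -> _; rewrite Q00 !add0e.
Qed.

Lemma psi_le (R : realType) (rho : {measure set R -> \bar R}) (t : R) (ht : (0 < t)%R)
  (r : R) (l : R) : (0 <= l)%R -> rho [set` (`]0, +oo[)%R] = r%:E ->
  laplace_exponent (scaled_measure ht rho) l <= (t * r)%:E.
Proof.
move=> l0 Hr.
have f0 : forall x : R, [set` (`]0, +oo[)%R] x -> 0 <= (1 - expR (- (l * x)))%:E.
  move=> x; rewrite /= in_itv /= andbT => x0.
  rewrite lee_fin subr_ge0 -expR0 ler_expR oppr_le0; apply: mulr_ge0 => //; exact: ltW.
rewrite /laplace_exponent /scaled_measure ge0_integral_mscale //=; last exact: m1exp.
rewrite EFinM; apply: lee_wpmul2l; first by rewrite lee_fin ltW.
rewrite -Hr -[X in _ <= X]mul1e -integral_cst; last exact: measurable_itv.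
apply: ge0_le_integral => //.
- exact: m1exp.
- move=> x _; rewrite lee_fin lerBlDr lerDl; exact: expR_ge0.
Qed.

Lemma mind (R : realType) (d : R) :
  measurable_fun [set: R] (fun x : R => ((\1_([set` (`]-oo, d])%R] : set R) x : R))%:E).
Proof. apply/measurable_EFinP; apply: measurable_indic; exact: measurable_itv. Qed.

Lemma E_upper (R : realType) (Q : probability R R) (d l : R) :
  Q [set` (`]-oo, 0[)%R] = 0 -> (0 <= l)%R -> (0 < d)%R ->
  \int[Q]_x (expR (- (l * x)))%:E <= Q [set` (`]-oo, d])%R] + (expR (- (l * d)))%:E.
Proof.
move=> HQ l0 d0.
have md : measurable [set` (`]-oo, d])%R] by exact: measurable_itv.
have -> : Q [set` (`]-oo, d])%R] + (expR (- (l * d)))%:E =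
  \int[Q]_x ((\1_[set` (`]-oo, d])%R] x)%:E + (expR (- (l * d)))%:E).
  rewrite ge0_integralD //.
  - rewrite integral_indic // setIT integral_cst //; congr (_ + _).
    by rewrite -[LHS]mule1; congr (_ * _); apply/esym; exact: probability_setT.
  - exact: (mind R d).
apply: ae_ge0_le_integral => //.
- exact: mexp.
- by move=> x _; rewrite adde_ge0 // lee_fin ?indic_ge0 ?expR_ge0.
- apply: emeasurable_funD; first exact: (mind R d).
  exact: measurable_cst.
exists [set` (`]-oo, 0[)%R]; split => //.
move=> x /=; rewrite in_itv /=; apply: contra_notT; rewrite -leNgt => x0 _.
rewrite indicE; case: (boolP (x \in _)) => [xd|].
  rewrite /= mulr1n lee_fin; apply: le_trans (_ : 1 <= _)%R.
    by rewrite -expR0 ler_expR oppr_le0 mulr_ge0.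
  by rewrite lerDl expR_ge0.
rewrite notin_setE /= in_itv /= => /negP; rewrite -ltNge => dx.
rewrite /= mulr0n add0e lee_fin ler_expR lerN2 ler_wpM2l //; exact: ltW.
Qed.

Lemma fin_prob (R : realType) (Q : probability R R) (A : set R) : measurable A ->
  exists a : R, Q A = a%:E.
Proof.
move=> mA; exists (fine (Q A)); rewrite fineK // ge0_fin_numE ?measure_ge0 //.
exact: (le_lt_trans (probability_le1 Q mA) (ltry _)).
Qed.

Lemma Qtail (R : realType) (rho : {measure set R -> \bar R}) (t : R) (ht : (0 < t)%R)
  (Q : probability R R) (r dd : R) : is_ID (scaled_measure ht rho) Q ->
  rho [set` (`]0, +oo[)%R] = r%:E -> (0 < dd)%R ->
  Q [set` (`]dd, +oo[)%R] <= (t * r)%:E.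
Proof.
move=> [HQ0 HQ] Hr d0.
have [a Ha] := fin_prob _ Q _ (measurable_itv `]-oo, dd]).
have [b Hb] := fin_prob _ Q _ (measurable_itv `]dd, +oo[).
have ab : (a + b = 1)%R.
  have := probability_setT Q.
  have -> : [set: R] = [set` (`]-oo, dd])%R] `|` [set` (`]dd, +oo[)%R].
    apply/seteqP; split => x // _ /=; rewrite !in_itv /= andbT.
    by case: (leP x dd) => hx; [left|right].
  rewrite measureU //=; first last.
  - apply/seteqP; split => x // -[] /=; rewrite !in_itv /= andbT => h1 h2.
    by move: (le_lt_trans h1 h2); rewrite ltxx.
  by rewrite Ha Hb => -[].
rewrite Hb; apply/lee_addgt0Pr => e e0; rewrite -EFinD lee_fin.
pose l := (dd * e)^-1%R.
have l0 : (0 <= l)%R by rewrite /l invr_ge0 mulr_ge0 // ltW.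
have h1 := E_upper _ Q dd l HQ0 l0 d0.
rewrite HQ // Ha in h1.
have h2 : expeR (- (t * r)%:E) <= expeR (- laplace_exponent (scaled_measure ht rho) l).
  by rewrite lee_expeR leeN2; exact: psi_le.
have h3 := le_trans h2 h1.
rewrite /= -EFinD lee_fin in h3.
have h4 : (expR (- (l * dd)) <= e)%R.
  have -> : (l * dd = e^-1)%R.
    by rewrite /l invfM mulrAC mulVf ?mul1r // gt_eqF.
  by rewrite -[X in (_ <= X)%R](invrK e); apply: expRN_le_inv; rewrite invr_gt0.
have h5 := expR_ge1Dx (- (t * r)).
lra.
Qed.

Local Close Scope ereal_scope.


Definition gmin (R : realType) (r : R) : R -> R := (fun t : R => t * r) \min (cst 1).
Arguments gmin {R}.

Lemma mgmin (R : realType) (r : R) (D : set R) :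
  measurable_fun D (fun t : R => (gmin r t)%:E).
Proof.
apply/measurable_EFinP; apply: measurable_minr.
- have -> : (fun t : R => t * r) = id \* cst r by [].
  exact: measurable_funM.
- exact: measurable_cst.
Qed.

Local Open Scope ereal_scope.

Lemma F2 (R : realType) (rho : {measure set R -> \bar R}) (t : R) (ht : (0 < t)%R)
  (Q : probability R R) (r : R) : is_ID (scaled_measure ht rho) Q ->
  rho [set` (`]0, +oo[)%R] = r%:E ->
  Q [set` (`]0, +oo[)%R] <= (t * r)%:E.
Proof.
move=> HID Hr; rewrite leNgt; apply/negP => H.
have [n Hn] := mu_pos_approx _ Q _ H.
have := Qtail _ _ _ ht Q r (n.+1%:R^-1) HID Hr.
rewrite invr_gt0 ltr0n => /(_ erefl).
by rewrite leNgt Hn.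
Qed.

Lemma int_min_fin (R : realType) (rho0 : {measure set R -> \bar R}) (r : R) :
  levy_measure rho0 -> (0 <= r)%R ->
  \int[rho0]_(t in [set` (`]0, +oo[)%R]) (gmin r t)%:E < +oo.
Proof.
move=> [_ _ L0] r0.
have g0 : forall t : R, (0 <= t)%R -> 0 <= (gmin r t)%:E.
  by move=> t t0; rewrite lee_fin /gmin /= le_min mulr_ge0 // ler01.
have -> : [set` (`]0, +oo[)%R] = [set` (`]0, 1[)%R] `|` [set` (`[1, +oo[)%R] :> set R.
  apply/seteqP; split => x /=; rewrite !in_itv /= ?andbT.
    by move=> x0; case: (ltP x 1%R) => hx; [left; rewrite x0|right].
  case=> /=; first by case/andP.
  by apply: lt_le_trans; rewrite ltr01.
rewrite ge0_integral_setU //; first last.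
- apply/disj_setPS => x [] /=; rewrite !in_itv /= andbT => /andP[_ h1] h2.
  by move: (lt_le_trans h1 h2); rewrite ltxx.
- move=> x [] /=; rewrite in_itv /= ?andbT.
    by move=> /andP[h _]; apply: g0; exact: ltW.
  by move=> h; apply: g0; apply: le_trans h; rewrite ler01.
- exact: mgmin.
apply: lte_add_pinfty.
- apply: (@le_lt_trans _ _ (\int[rho0]_(t in [set` (`]0, 1[)%R]) (r%:E * t%:E))).
    apply: ge0_le_integral => //.
    + by move=> x; rewrite /= in_itv /= => /andP[h _]; apply: g0; exact: ltW.
    + exact: mgmin.
    + apply/measurable_EFinP.
      by apply: measurable_funM.
    + by move=> x _; rewrite /gmin /= -EFinM lee_fin mulrC ge_min lexx.
  rewrite ge0_integralZl //.
  + apply: lte_mul_pinfty; [by rewrite lee_fin | by [] | ].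
    by have [_ h] := L0 1%R ltr01.
  + by move=> x; rewrite /= in_itv /= lee_fin => /andP[h _]; exact: ltW.
- apply: (@le_lt_trans _ _ (\int[rho0]_(t in [set` (`[1, +oo[)%R]) (cst 1 t))).
    apply: ge0_le_integral => //.
    + by move=> x; rewrite /= in_itv /= andbT => h; apply: g0; exact: le_trans h.
    + exact: mgmin.
    + by move=> x _; rewrite /gmin /= lee_fin ge_min lexx orbT.
  rewrite integral_cst ?mul1e; last exact: measurable_itv.
  have h2 : (0 < 2^-1 :> R)%R by rewrite invr_gt0.
  have [h _] := L0 _ h2.
  apply: le_lt_trans h; apply: le_measure; rewrite ?inE; try exact: measurable_itv.
  move=> x; rewrite /= !in_itv /= !andbT; apply: lt_le_trans.
  by rewrite invf_lt1 // ltr1n.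
Qed.

Local Close Scope ereal_scope.

Theorem mainTheorem4 (R : realType) (rho0 rho : {measure set R -> \bar R})
    (P : R -> probability R R) :
  levy_measure rho0 -> levy_measure rho ->
  (forall (t : R) (ht : 0 < t), is_ID (scaled_measure ht rho) (P t)) ->
  ((\int[rho0]_(t in [set` (`]0, +oo[)%R]) P t [set` (`]0, +oo[)%R] = +oo)%E <->
   (rho0 [set` (`]0, +oo[)%R] = +oo /\ rho [set` (`]0, +oo[)%R] = +oo)%E).
Proof.
Local Open Scope ereal_scope.
move=> L0 L HID.
have P0 : forall t : R, [set` (`]0, +oo[)%R] t -> 0 <= P t [set` (`]0, +oo[)%R].
  by move=> t _; exact: measure_ge0.
split.
- move=> HI.
  have r0 : rho0 [set` (`]0, +oo[)%R] = +oo.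
    apply/eqP; rewrite eq_le leey /= -HI -[X in _ <= X]mul1e -integral_cst //.
    apply: my_le_integral => // t _; exact: probability_le1.
  split => //.
  have hge : 0 <= rho [set` (`]0, +oo[)%R] := measure_ge0 _ _.
  case Hm: (rho [set` (`]0, +oo[)%R]) => [r| |] //; last first.
    by move: hge; rewrite Hm.
  have r0' : (0 <= r)%R by rewrite -lee_fin -Hm.
  exfalso.
  suff : \int[rho0]_(t in [set` (`]0, +oo[)%R]) P t [set` (`]0, +oo[)%R] < +oo.
    by rewrite HI ltxx.
  apply: le_lt_trans (int_min_fin _ _ _ L0 r0').
  apply: my_le_integral => // t.
  rewrite /= in_itv /= andbT => t0.
  rewrite /gmin /= EFin_min le_min probability_le1 // andbT.
  exact: F2 _ _ _ t0 _ _ (HID t t0) Hm.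
- move=> [r0 rm].
  rewrite (eq_integral (cst 1)) ?integral_cst ?mul1e //.
  move=> t; rewrite inE /= in_itv /= andbT => t0.
  exact: F1 _ _ _ t0 _ (HID t t0) rm.
Qed.
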